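(* Let $F$ be a semi-safe sentence and let $c(F)$ be the set of object constants occurring in $F$. Then $\mathrm{SM}[F]$ entails $\mathit{SPP}_{c(F)}$; that is, every interpretation satisfying $\mathrm{SM}[F]$ satisfies $\mathit{SPP}_{c(F)}$.
   Context: Formulas are first-order formulas over a signature with object constants, predicate constants and equality, but no function constants of arity $>0$. The primitive connectives are $\bot,\land,\lor,\rightarrow$ and the quantifiers $\forall,\exists$; $\neg F$ abbreviates $F\rightarrow\bot$, $\top$ abbreviates $\bot\rightarrow\bot$, and $F\leftrightarrow G$ abbreviates $(F\rightarrow G)\land(G\rightarrow F)$. A sentence is a formula without free variables. Stable model operator: for a sentence $F$, let $\mathbf p=p_1,\dots,p_n$ be all predicate constants occurring in $F$ and $\mathbf u=u_1,\dots,u_n$ distinct predicate variables with matching arities. $\mathbf u\le\mathbf p$ is $\bigwedge_i\forall\mathbf x(u_i(\mathbf x)\rightarrow p_i(\mathbf x))$, $\mathbf u=\mathbf p$ is $\bigwedge_i\forall\mathbf x(u_i(\mathbf x)\leftrightarrow p_i(\mathbf x))$, and $\mathbf u<\mathbf p$ is $(\mathbf u\le\mathbf p)\land\neg(\mathbf u=\mathbf p)$. $F^*(\mathbf u)$ is defined recursively: $p_i(\mathbf t)^*=u_i(\mathbf t)$; $(t_1=t_2)^*=(t_1=t_2)$; $\bot^*=\bot$; $(G\land H)^*=G^*\land H^*$; $(G\lor H)^*=G^*\lor H^*$; $(G\rightarrow H)^*=(G^*\rightarrow H^* )\land(G\rightarrow H)$; $(\forall xG)^*=\forall xG^*$; $(\exists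 xG)^*=\exists xG^*$. Then $\mathrm{SM}[F]$ is the second-order sentence $F\land\neg\exists\mathbf u((\mathbf u<\mathbf p)\land F^*(\mathbf u))$. Restricted variables: for a quantifier-free formula $F$, the set $\mathrm{RV}(F)$ is defined by: if $F$ is atomic and an equality between two variables, $\mathrm{RV}(F)=\emptyset$; if $F$ is any other atomic formula, $\mathrm{RV}(F)$ is the set of variables occurring in $F$; $\mathrm{RV}(\bot)=\emptyset$; $\mathrm{RV}(G\land H)=\mathrm{RV}(G)\cup\mathrm{RV}(H)$; $\mathrm{RV}(G\lor H)=\mathrm{RV}(G)\cap\mathrm{RV}(H)$; $\mathrm{RV}(G\rightarrow H)=\emptyset$. An occurrence of a subformula or variable in a formula is strictly positive if it is not in the antecedent of any implication. A sentence in prenex form $Q_1x_1\cdots Q_nx_nM$ ($M$ quantifier-free, $x_i$ distinct) is semi-safe if every strictly positive occurrence of every variable $x_i$ in $M$ belongs to a subformula $G\rightarrow H$ of $M$ such that $x_i\in\mathrm{RV}(G)$. Small predicate property: for a finite set $\mathbf c$ of object constants, $\mathit{in}_{\mathbf c}(x_1,\dots,x_m)$ denotes $\bigwedge_{1\le j\le m}\bigvee_{c\in\mathbf c}x_j=c$, and $\mathit{SPP}_{\mathbf c}$ denotes the conjunction of the sentences $\forall\mathbf x(p_i(\mathbf x)\rightarrow\mathit{in}_{\mathbf c}(\mathbf x))$ over all predicate constants $p_i$ occurring in $F$ ($\mathbf x$ a list of distinct variables of the arity of $p_i$). *)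

(* Defs.v *)
From Stdlib Require Import List Arith.
Import ListNotations.

Inductive term : Type :=
| TVar : nat -> term
| TConst : nat -> term.

Record psym : Type := mkPsym { pname : nat; parity : nat }.

Inductive formula : Type :=
| FAtom : psym -> list term -> formula
| FEq : term -> term -> formula
| FBot : formula
| FAnd : formula -> formula -> formula
| FOr : formula -> formula -> formula
| FImp : formula -> formula -> formula
| FAll : nat -> formula -> formula
| FEx : nat -> formula -> formula.

Definition FNeg (F : formula) : formula := FImp F FBot.
Definition FTop : formula := FImp FBot FBot.
Definition FIff (F G : formula) : formula := FAnd (FImp F G) (FImp G F).

Fixpoint wf (F : formula) : Prop :=
  match F with
  | FAtom p ts => length ts = parity p
  | FEq _ _ | FBot => True
  | FAnd G H | FOr G H | FImp G H => wf G /\ wf H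
  | FAll _ G | FEx _ G => wf G
  end.

Definition term_vars (t : term) : list nat :=
  match t with TVar x => [x] | TConst _ => [] end.

Definition term_consts (t : term) : list nat :=
  match t with TVar _ => [] | TConst c => [c] end.

Fixpoint fv (F : formula) : list nat :=
  match F with
  | FAtom _ ts => flat_map term_vars ts
  | FEq t1 t2 => term_vars t1 ++ term_vars t2
  | FBot => []
  | FAnd G H | FOr G H | FImp G H => fv G ++ fv H
  | FAll x G | FEx x G => remove Nat.eq_dec x (fv G)
  end.

Definition sentence (F : formula) : Prop := fv F = [].

Fixpoint consts (F : formula) : list nat :=
  match F with
  | FAtom _ ts => flat_map term_consts ts
  | FEq t1 t2 => term_consts t1 ++ term_consts t2
  | FBot => []
  | FAnd G H | FOr G H | FImp G H => consts G ++ consts H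
  | FAll _ G | FEx _ G => consts G
  end.

Fixpoint preds (F : formula) : list psym :=
  match F with
  | FAtom p _ => [p]
  | FEq _ _ | FBot => []
  | FAnd G H | FOr G H | FImp G H => preds G ++ preds H
  | FAll _ G | FEx _ G => preds G
  end.

Fixpoint qfree (F : formula) : Prop :=
  match F with
  | FAtom _ _ | FEq _ _ | FBot => True
  | FAnd G H | FOr G H | FImp G H => qfree G /\ qfree H
  | FAll _ _ | FEx _ _ => False
  end.

Inductive quant : Type := QAll | QEx.

Definition prenex (qs : list (quant * nat)) (M : formula) : formula :=
  fold_right (fun qx G => match fst qx with
                          | QAll => FAll (snd qx) G
                          | QEx => FEx (snd qx) G end) M qs.

Fixpoint inRV (x : nat) (F : formula) : Prop :=
  match F with
  | FAtom _ ts => In x (flat_map term_vars ts)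
  | FEq t1 t2 =>
      match t1, t2 with
      | TVar _, TVar _ => False
      | _, _ => In x (term_vars t1 ++ term_vars t2)
      end
  | FBot => False
  | FAnd G H => inRV x G \/ inRV x H
  | FOr G H => inRV x G /\ inRV x H
  | FImp _ _ => False
  | FAll _ _ | FEx _ _ => False   (* not used: RV is only for q.-free formulas *)
  end.

(* [covered x M]: every strictly positive occurrence of x in M belongs to a
   subformula G -> H of M with x in RV(G). *)
Fixpoint covered (x : nat) (M : formula) : Prop :=
  match M with
  | FAtom _ ts => ~ In x (flat_map term_vars ts)
  | FEq t1 t2 => ~ In x (term_vars t1 ++ term_vars t2)
  | FBot => True
  | FAnd G H | FOr G H => covered x G /\ covered x H
  | FImp G H => inRV x G \/ covered x H
  | FAll _ G | FEx _ G => covered x G   (* not used: M is quantifier-free *)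
  end.

Definition semi_safe (qs : list (quant * nat)) (M : formula) : Prop :=
  qfree M /\ NoDup (map snd qs) /\ sentence (prenex qs M) /\
  forall x, In x (map snd qs) -> covered x M.

Section Semantics.
Variable D : Type.
Variable cI : nat -> D.
Variable pI : psym -> list D -> Prop.

Definition upd (env : nat -> D) (x : nat) (d : D) : nat -> D :=
  fun y => if Nat.eq_dec y x then d else env y.

Definition teval (env : nat -> D) (t : term) : D :=
  match t with TVar x => env x | TConst c => cI c end.

Fixpoint sat (env : nat -> D) (F : formula) : Prop :=
  match F with
  | FAtom p ts => pI p (map (teval env) ts)
  | FEq t1 t2 => teval env t1 = teval env t2
  | FBot => False
  | FAnd G H => sat env G /\ sat env H
  | FOr G H => sat env G \/ sat env H
  | FImp G H => sat env G -> sat env H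
  | FAll x G => forall d : D, sat (upd env x d) G
  | FEx x G => exists d : D, sat (upd env x d) G
  end.

(* Truth value of F*(u) where the predicate variables u are interpreted by U. *)
Fixpoint sat_star (U : psym -> list D -> Prop) (env : nat -> D) (F : formula)
  : Prop :=
  match F with
  | FAtom p ts => U p (map (teval env) ts)
  | FEq t1 t2 => teval env t1 = teval env t2
  | FBot => False
  | FAnd G H => sat_star U env G /\ sat_star U env H
  | FOr G H => sat_star U env G \/ sat_star U env H
  | FImp G H => (sat_star U env G -> sat_star U env H) /\ (sat env G -> sat env H)
  | FAll x G => forall d : D, sat_star U (upd env x d) G
  | FEx x G => exists d : D, sat_star U (upd env x d) G
  end.

Definition pleq (ps : list psym) (U P : psym -> list D -> Prop) : Prop :=
  forall p, In p ps -> forall l : list D, length l = parity p -> U p l -> P p l.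

Definition peq (ps : list psym) (U P : psym -> list D -> Prop) : Prop :=
  forall p, In p ps -> forall l : list D, length l = parity p -> (U p l <-> P p l).

Definition plt (ps : list psym) (U P : psym -> list D -> Prop) : Prop :=
  pleq ps U P /\ ~ peq ps U P.

Definition sat_SM (F : formula) : Prop :=
  forall env : nat -> D,
    sat env F /\
    ~ (exists U : psym -> list D -> Prop, plt (preds F) U pI /\ sat_star U env F).

Definition in_c (c : list nat) (l : list D) : Prop :=
  forall d, In d l -> exists k, In k c /\ d = cI k.

Definition sat_SPP (c : list nat) (F : formula) : Prop :=
  forall p, In p (preds F) ->
    forall l : list D, length l = parity p -> pI p l -> in_c c l.

End Semantics.

(* Main.v *)
Require Import Defs.
From Stdlib Require Import List Arith.
From Stdlib Require Import Classical.
Import ListNotations.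

Section S.
Variable D : Type.
Variable cI : nat -> D.
Variable pI : psym -> list D -> Prop.
Variable c : list nat.

Definition good (env : nat -> D) x := exists k, In k c /\ env x = cI k.
Definition Ur (p : psym) (l : list D) := pI p l /\ in_c D cI c l.

Lemma consts_prenex qs M : consts (prenex qs M) = consts M.
Proof. induction qs as [|[[|] y] qs IH]; simpl; auto. Qed.

Lemma preds_prenex qs M : preds (prenex qs M) = preds M.
Proof. induction qs as [|[[|] y] qs IH]; simpl; auto. Qed.

Lemma fv_prenex qs M x : In x (fv M) -> In x (fv (prenex qs M)) \/ In x (map snd qs).
Proof.
  induction qs as [|[q y] qs IH]; simpl; intros H; auto.
  destruct (IH H) as [H1|H1]; [|auto].
  destruct (Nat.eq_dec x y) as [->|n]; [auto|].
  left; destruct q; simpl; apply in_in_remove; auto.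
Qed.

Lemma notfree_covered M x : qfree M -> ~ In x (fv M) -> covered x M.
Proof.
  induction M; simpl; intros Q H; auto; try tauto;
  try (destruct Q; split; [apply IHM1|apply IHM2]; auto; intro; apply H; apply in_or_app; auto).
  destruct Q; right; apply IHM2; auto; intro; apply H; apply in_or_app; auto.
Qed.

Lemma star_sat G env : qfree G -> sat_star D cI pI Ur env G -> sat D cI pI env G.
Proof.
  induction G; simpl; intros Q H; unfold Ur in *; firstorder.
Qed.

Lemma rv_good G env x : (forall k, In k (consts G) -> In k c) -> inRV x G ->
  sat_star D cI pI Ur env G -> good env x.
Proof.
  induction G; simpl; intros C R S; try tauto.
  - destruct S as [_ S]. unfold in_c in S.
    destruct (S (env x)) as [k [Hk Hx]].
    + apply in_flat_map in R as [t [Ht Hx]].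
      destruct t; simpl in Hx; [|tauto]. destruct Hx as [<-|[]].
      apply (in_map (teval D cI env)) in Ht; exact Ht.
    + exists k; auto.
  - destruct t, t0; simpl in *; try tauto.
    + destruct R as [<-|[]]. exists n0; split; auto.
    + destruct R as [<-|[]]. exists n; split; auto.
  - destruct S; destruct R; [apply IHG1|apply IHG2]; auto; intros; apply C; apply in_or_app; auto.
  - destruct R, S; [apply IHG1|apply IHG2]; auto; intros; apply C; apply in_or_app; auto.
Qed.

Lemma main_qf M env : qfree M -> (forall k, In k (consts M) -> In k c) ->
  (forall x, ~ good env x -> covered x M) -> sat D cI pI env M -> sat_star D cI pI Ur env M.
Proof.
  induction M; simpl; intros Q C B S; try tauto.
  - split; auto. intros d Hd. apply in_map_iff in Hd as [t [<- Ht]].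
    destruct t; simpl.
    + destruct (classic (good env n)) as [G|G]; [exact G|].
      exfalso. apply (B n G). apply in_flat_map. exists (TVar n); simpl; auto.
    + exists n; split; auto. apply C. apply in_flat_map. exists (TConst n); simpl; auto.
  - destruct Q, S; split; [apply IHM1|apply IHM2]; auto;
    try (intros; apply C; apply in_or_app; auto); intros x G; apply B in G; tauto.
  - destruct Q, S; [left; apply IHM1|right; apply IHM2]; auto;
    try (intros; apply C; apply in_or_app; auto); intros x G; apply B in G; tauto.
  - destruct Q as [Q1 Q2]. split; auto.
    intros SG. apply IHM2; auto.
    + intros; apply C; apply in_or_app; auto.
    + intros x G. destruct (B x G) as [R|R]; auto.
      exfalso; apply G. apply (rv_good M1); auto. intros; apply C; apply in_or_app; auto.
    + apply S. apply star_sat; auto.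
Qed.

Lemma main_prenex qs M : qfree M -> (forall k, In k (consts M) -> In k c) ->
  (forall x, In x (map snd qs) -> covered x M) ->
  forall env, (forall x, ~ good env x -> covered x M) ->
  sat D cI pI env (prenex qs M) -> sat_star D cI pI Ur env (prenex qs M).
Proof.
  intros Q C. induction qs as [|[q y] qs IH]; simpl; intros Hq env B S.
  - apply main_qf; auto.
  - assert (Hb : forall d x, ~ good (upd D env y d) x -> covered x M).
    { intros d x G. unfold good, upd in G. destruct (Nat.eq_dec x y) as [->|n]; auto. }
    destruct q; simpl in *.
    + intros d; apply IH; auto; apply Hb.
    + destruct S as [d Sd]; exists d; apply IH; auto; apply Hb.
Qed.
End S.

Theorem proposition1 :
  forall (qs : list (quant * nat)) (M : formula),
    wf (prenex qs M) ->
    semi_safe qs M ->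
    forall (D : Type) (cI : nat -> D) (pI : psym -> list D -> Prop),
      inhabited D ->
      sat_SM D cI pI (prenex qs M) ->
      sat_SPP D cI pI (consts (prenex qs M)) (prenex qs M).
Proof.
  intros qs M _ [Q [_ [Sn Cv]]] D cI pI [d0] SM p Hp l Hl Pl.
  apply NNPP; intros Nin.
  set (c := consts (prenex qs M)).
  set (env0 := fun _ : nat => d0).
  destruct (SM env0) as [S NU]. apply NU.
  exists (Ur D cI pI c). split.
  - split.
    + intros p' _ l' _ [H _]; exact H.
    + intros E. apply Nin. apply (proj2 (E p Hp l Hl) Pl).
  - apply main_prenex; auto.
    + intros k Hk; unfold c; rewrite consts_prenex; auto.
    + intros x _. destruct (in_dec Nat.eq_dec x (map snd qs)) as [I|I]; auto.
      apply (@notfree_covered D); auto. intros F.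
      destruct (fv_prenex qs M x F) as [F'|F']; auto.
      unfold sentence in Sn; rewrite Sn in F'; destruct F'.
Qed.
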